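(* Fix a positive integer $k$. For a power $q$ of an odd prime with $q\equiv1\pmod4$, $k\mid q-1$ and $e=(q-1)/k$ even, and a primitive root $\alpha$ of $\mathbb{F}_q$, put $\beta=\alpha^{e}$ and let $\chi$ be the quadratic residue character of $\mathbb{F}_q$. (i) If $k$ is odd, there is a subset $S_k\subseteq\{\pm1\}^{(k-1)/2}$, depending only on $k$, such that for all such $q$ and $\alpha$: $(q,k)$ gives a $3$-design if and only if $(\chi(1-\beta),\chi(1-\beta^2),\dots,\chi(1-\beta^{(k-1)/2}))\in S_k$. (ii) If $k\equiv2\pmod4$, there is a subset $S_k\subseteq\{\pm1\}^{(k+2)/4}$, depending only on $k$, such that for all such $q$ and $\alpha$: $(q,k)$ gives a $3$-design if and only if $(\chi(1-\beta^2),\chi(1-\beta^4),\dots,\chi(1-\beta^{k/2-1}),\chi(2))\in S_k$.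
   Context: The group $\mathrm{PSL}(2,q)$ acts on $\mathrm{PG}(1,q)=\mathbb{F}_q\cup\{\infty\}$ by linear fractional transformations $z\mapsto (az+b)/(cz+d)$ with $ad-bc$ a nonzero square in $\mathbb{F}_q$. ''$(q,k)$ gives a $3$-design'' means that the $\mathrm{PSL}(2,q)$-orbit of $B=\langle\beta\rangle$, the subgroup of order $k$ of $\mathbb{F}_q^\times$, is the block set of a $3$-$(q+1,k,\lambda)$ design for some positive integer $\lambda$. $\chi(a)=1$ if $a$ is a nonzero square in $\mathbb{F}_q$ and $\chi(a)=-1$ otherwise. *)

(* Defs.v *)
From mathcomp Require Import all_boot all_order all_algebra all_field.
Set Implicit Arguments. Unset Strict Implicit. Unset Printing Implicit Defensive.
Import GRing.Theory.
Local Open Scope ring_scope.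

Section Defs.
Variable F : finFieldType.

Definition nzsq (a : F) : bool := (a != 0) && [exists y : F, y ^+ 2 == a].

Definition chi (a : F) : int := if nzsq a then 1%R else (-1)%R.

(* PG(1,F) = F ∪ {∞}, with None = ∞ *)
Definition mobius (a b c d : F) (z : option F) : option F :=
  match z with
  | None => if c == 0 then None else Some (a / c)
  | Some x => if c * x + d == 0 then None else Some ((a * x + b) / (c * x + d))
  end.

(* elements of PSL(2,F): z |-> (az+b)/(cz+d) with ad - bc a nonzero square *)
Definition psl_coeff (m : F * F * F * F) : bool :=
  let: (a, b, c, d) := m in nzsq (a * d - b * c).

Definition psl_map (m : F * F * F * F) : option F -> option F :=
  let: (a, b, c, d) := m in mobius a b c d.

Definition psl_orbit (B : {set option F}) : {set {set option F}} :=
  [set X : {set option F} | [exists m, psl_coeff m && (X == psl_map m @: B)]].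

(* the subgroup of order k of F^x, embedded in PG(1,F) (for k | q-1) *)
Definition subgroup_k (k : nat) : {set option F} :=
  [set Some x | x in [set x : F | x ^+ k == 1]].

Definition gives_3design (k : nat) : Prop :=
  exists lam : nat, (0 < lam)%N /\
    forall T : {set option F}, #|T| = 3%N ->
      #|[set X in psl_orbit (subgroup_k k) | T \subset X]| = lam.
End Defs.

Definition pm1_seqs (m : nat) (S : seq int -> Prop) : Prop :=
  forall s, S s -> size s = m /\ all (fun x => (x == 1) || (x == -1)) s.

(* Main.v *)
Require Import Defs.
From mathcomp Require Import all_boot all_order all_algebra all_field.
From mathcomp Require Import ring zify.
Set Implicit Arguments. Unset Strict Implicit. Unset Printing Implicit Defensive.
Import GRing.Theory.
Local Open Scope ring_scope.

Section Proj.
Variable F : finFieldType.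
Implicit Types (P Q R : option F) (u : F * F) (m : F * F * F * F).

Definition vv P : F * F := if P is Some x then (x, 1) else (1, 0).
Definition pt u : option F := if u.2 == 0 then None else Some (u.1 / u.2).
Definition app m u : F * F := let: (a, b, c, d) := m in (a * u.1 + b * u.2, c * u.1 + d * u.2).
Definition det m : F := let: (a, b, c, d) := m in a * d - b * c.
Definition mmul m (n : F * F * F * F) : F * F * F * F :=
  let: (a, b, c, d) := m in let: (a', b', c', d') := n in
  (a * a' + b * c', a * b' + b * d', c * a' + d * c', c * b' + d * d').
Definition minv m : F * F * F * F := let: (a, b, c, d) := m in (d, - b, - c, a).
Definition brk P Q : F := (vv P).1 * (vv Q).2 - (vv P).2 * (vv Q).1.

Lemma psl_mapE m P : psl_map m P = pt (app m (vv P)).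
Proof.
case: m => [[[a b] c] d]; case: P => [x|] //=; rewrite /pt /=.
  by rewrite !mulr1.
by rewrite !mulr1 !mulr0 !addr0.
Qed.

Lemma psl_coeffE m : psl_coeff m = nzsq (det m).
Proof. by case: m => [[[a b] c] d]. Qed.

Lemma vv_neq0 P : vv P != (0, 0).
Proof. by case: P => [x|] /=; rewrite xpair_eqE ?oner_eq0 ?andbF ?andFb. Qed.

Lemma pt_scale (l : F) u : l != 0 -> pt (l * u.1, l * u.2) = pt u.
Proof.
move=> lnz; rewrite /pt /= mulf_eq0 (negbTE lnz) /=.
case: ifP => // u2; congr Some; rewrite invfM mulrACA divff // mul1r //.
Qed.

Definition lamf u : F := if u.2 == 0 then u.1^-1 else u.2^-1.

Lemma vv_pt u : u != (0, 0) -> lamf u != 0 /\ vv (pt u) = (lamf u * u.1, lamf u * u.2).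
Proof.
case: u => u1 u2; rewrite /pt /lamf /= xpair_eqE negb_and.
have [->|u2nz] := eqVneq u2 0; rewrite /= => h.
  rewrite orbF in h.
  by rewrite invr_eq0 h mulr0 mulVf.
by rewrite invr_eq0 u2nz mulVf // mulrC.
Qed.

Lemma pt_vv P : pt (vv P) = P.
Proof. by case: P => [x|] //=; rewrite /pt /= ?oner_eq0 ?divr1 ?eqxx. Qed.

Lemma app_neq0 m u : det m != 0 -> u != (0, 0) -> app m u != (0, 0).
Proof.
case: m => [[[a b] c] d]; case: u => u1 u2 /= hd.
apply: contra => /eqP [h1 h2]; rewrite xpair_eqE.
have e1 : (a * d - b * c) * u1 = 0.
  have -> : (a * d - b * c) * u1 = d * (a * u1 + b * u2) - b * (c * u1 + d * u2) by ring.
  by rewrite h1 h2; ring.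
have e2 : (a * d - b * c) * u2 = 0.
  have -> : (a * d - b * c) * u2 = a * (c * u1 + d * u2) - c * (a * u1 + b * u2) by ring.
  by rewrite h1 h2; ring.
move: e1 e2 => /eqP; rewrite mulf_eq0 (negbTE hd) /= => -> /eqP.
by rewrite mulf_eq0 (negbTE hd).
Qed.

Lemma app_scale m l u : app m (l * u.1, l * u.2) = (l * (app m u).1, l * (app m u).2).
Proof. case: m => [[[a b] c] d] /=; congr pair; ring. Qed.

Lemma app_mul m n u : app (mmul m n) u = app m (app n u).
Proof. case: m => [[[a b] c] d]; case: n => [[[a' b'] c'] d'] /=; congr pair; ring. Qed.

Lemma det_mul m n : det (mmul m n) = det m * det n.
Proof. case: m => [[[a b] c] d]; case: n => [[[a' b'] c'] d'] /=; ring. Qed.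

Lemma det_inv m : det (minv m) = det m.
Proof. case: m => [[[a b] c] d] /=; ring. Qed.

Lemma app_inv m u : app (minv m) (app m u) = (det m * u.1, det m * u.2).
Proof. case: m => [[[a b] c] d] /=; congr pair; ring. Qed.

Lemma psl_map_comp m n P : det n != 0 ->
  psl_map m (psl_map n P) = psl_map (mmul m n) P.
Proof.
move=> hn; rewrite !psl_mapE app_mul.
have [lnz ->] := vv_pt (app_neq0 hn (vv_neq0 P)).
by rewrite app_scale pt_scale.
Qed.

Lemma psl_map_invK m P : det m != 0 -> psl_map (minv m) (psl_map m P) = P.
Proof.
move=> hm; rewrite psl_map_comp // psl_mapE app_mul app_inv pt_scale //.
exact: pt_vv.
Qed.

Lemma psl_map_inj m : det m != 0 -> injective (psl_map m).
Proof. by move=> hm; apply: (can_inj (fun P => psl_map_invK P hm)). Qed.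

Lemma nzsqM (x y : F) : nzsq x -> nzsq y -> nzsq (x * y).
Proof.
case/andP=> xnz /existsP [s /eqP hs]; case/andP=> ynz /existsP [t /eqP ht].
rewrite /nzsq mulf_eq0 negb_or xnz ynz /=; apply/existsP; exists (s * t).
by rewrite exprMn hs ht.
Qed.

Lemma nzsq_neq0 (x : F) : nzsq x -> x != 0.
Proof. by case/andP. Qed.

Lemma nzsq_sq (x : F) : x != 0 -> nzsq (x ^+ 2).
Proof. by move=> xnz; rewrite /nzsq expf_eq0 /= xnz /=; apply/existsP; exists x. Qed.

Definition lam m P := lamf (app m (vv P)).

Lemma lam_neq0 m P : det m != 0 -> lam m P != 0.
Proof. by move=> hm; have [] := vv_pt (app_neq0 hm (vv_neq0 P)). Qed.

Lemma brk_map m P Q : det m != 0 ->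
  brk (psl_map m P) (psl_map m Q) = lam m P * lam m Q * det m * brk P Q.
Proof.
move=> hm; rewrite /brk !psl_mapE /lam.
have [_ ->] := vv_pt (app_neq0 hm (vv_neq0 P)).
have [_ ->] := vv_pt (app_neq0 hm (vv_neq0 Q)).
case: m hm => [[[a b] c] d] /= _; ring.
Qed.

Lemma brk_eq0 P Q : (brk P Q == 0) = (P == Q).
Proof.
case: P => [x|]; case: Q => [y|]; rewrite /brk /= ?mulr1 ?mul1r ?mulr0 ?mul0r ?subr0 ?sub0r ?oppr_eq0 ?oner_eq0 //.
  by rewrite subr_eq0.
by rewrite eqxx.
Qed.

Lemma brkC P Q : brk Q P = - brk P Q.
Proof. rewrite /brk; ring. Qed.

End Proj.

Section Chi.
Variable F : finFieldType.
Variable alpha : F.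
Hypothesis q4 : (#|F| %% 4 = 1)%N.
Hypothesis prim : (#|F|.-1).-primitive_root alpha.

Lemma q_facts : (0 < #|F|.-1)%N /\ (2 %| #|F|.-1)%N /\ (2 %| #|F|.-1 %/ 2)%N /\ (0 < #|F|.-1 %/ 2 < #|F|.-1)%N.
Proof.
have h1 : (1 < #|F|)%N.
  rewrite (cardD1 (0 : F)) (cardD1 (1 : F)) !inE oner_neq0 /=; by [].
have := q4; lia.
Qed.

Lemma alpha_neq0 : alpha != 0.
Proof. by rewrite (prim_root_eq0 prim) -lt0n; case: q_facts. Qed.

Lemma expq1 (x : F) : x != 0 -> x ^+ #|F|.-1 = 1.
Proof.
move=> nz; have := expf_card x.
have -> : #|F| = (#|F|.-1).+1 by case: q_facts => h _; lia.
by rewrite exprS => /eqP; rewrite -[X in _ == X]mulr1 (inj_eq (mulfI nz)) => /eqP.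
Qed.

Lemma logP (x : F) : x != 0 -> exists i, x = alpha ^+ i.
Proof. by move=> /expq1 /(prim_rootP prim) [i ->]; exists i. Qed.

Lemma nzsq_exp i : nzsq (alpha ^+ i) = ~~ odd i.
Proof.
rewrite /nzsq expf_eq0 (negbTE alpha_neq0) andbF /=.
apply/existsP/idP => [[y /eqP hy]|ev].
  have ynz : y != 0.
    by apply/eqP => y0; move: hy; rewrite y0 expr0n /= => /esym/eqP; rewrite expf_eq0 (negbTE alpha_neq0) andbF.
  have [j hj] := logP ynz.
  move: hy; rewrite hj -exprM => /eqP; rewrite (eq_prim_root_expr prim) => /eqP hm.
  have [_ [h2 _]] := q_facts.
  have := congr1 (modn^~ 2) hm; rewrite /= !modn_dvdm // modnMl modn2.
  by case: (odd i).
exists (alpha ^+ i./2); apply/eqP; rewrite -exprM.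
by congr (_ ^+ _); rewrite -{2}(odd_double_half i) (negbTE ev) add0n -muln2.
Qed.

Lemma chi_exp i : chi (alpha ^+ i) = (-1) ^+ i.
Proof.
rewrite /chi nzsq_exp -signr_odd.
by case: (odd i).
Qed.

Lemma chiM (x y : F) : x != 0 -> y != 0 -> chi (x * y) = chi x * chi y.
Proof.
move=> /logP [i ->] /logP [j ->].
by rewrite -exprD !chi_exp exprD.
Qed.

Lemma chi0 : chi (0 : F) = -1.
Proof. by rewrite /chi /nzsq eqxx. Qed.

Lemma chi_sq (s y : F) : nzsq s -> chi (s * y) = chi y.
Proof.
move=> hs; have snz : s != 0 by case/andP: hs.
have [->|ynz] := eqVneq y 0; first by rewrite mulr0.
by rewrite chiM // /chi hs mul1r.
Qed.

Lemma chi_alpha : chi alpha = -1.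
Proof. by rewrite -[alpha]expr1 chi_exp. Qed.

Lemma chi_pm (x : F) : chi x * chi x = 1.
Proof. by rewrite /chi; case: nzsq; rewrite ?mulr1 ?mulrNN ?mulr1. Qed.

Lemma alpha_half : alpha ^+ (#|F|.-1 %/ 2) = -1.
Proof.
have [h0 [h2 [h4 hlt]]] := q_facts.
set z := alpha ^+ _.
have z2 : z ^+ 2 = 1.
  by rewrite /z -exprM divnK // prim_expr_order.
have zn1 : z != 1.
  rewrite /z -(expr0 alpha) (eq_prim_root_expr prim) mod0n modn_small; last by case/andP: hlt.
  by rewrite -lt0n; case/andP: hlt.
have : (z - 1) * (z + 1) == 0 by rewrite mulrDr mulr1 mulrBl mul1r -expr2 z2; apply/eqP; ring.
rewrite mulf_eq0 subr_eq0 (negbTE zn1) /= addr_eq0 => /eqP //.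
Qed.

Lemma nzsqN1 : nzsq (-1 : F).
Proof. by rewrite -alpha_half nzsq_exp -dvdn2; case: q_facts => _ [_ []]. Qed.

Lemma chiN (x : F) : chi (- x) = chi x.
Proof. by rewrite -mulN1r chi_sq // nzsqN1. Qed.


Lemma nzsq_chi (x : F) : nzsq x = (chi x == 1).
Proof. by rewrite /chi; case: nzsq => //=; rewrite eq_sym -subr_eq0 opprK; rewrite (_ : 1 + 1 = 2%:R) // pnatr_eq0. Qed.

Lemma chiV (x : F) : chi x^-1 = chi x.
Proof.
have [->|xnz] := eqVneq x 0; first by rewrite invr0.
have -> : x^-1 = (x^-1) ^+ 2 * x by rewrite expr2 -mulrA mulVf ?mulr1.
by rewrite chi_sq // nzsq_sq // invr_eq0.
Qed.

Definition trip := (option F * option F * option F)%type.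
Definition tset (t : trip) : {set option F} := [set t.1.1; t.1.2; t.2].
Definition distinct (t : trip) := [&& t.1.1 != t.1.2, t.1.2 != t.2 & t.2 != t.1.1].
Definition prodb (t : trip) : F := brk t.1.1 t.1.2 * brk t.1.2 t.2 * brk t.2 t.1.1.
Definition cls (t : trip) : int := chi (prodb t).
Definition gmap m (t : trip) : trip := (psl_map m t.1.1, psl_map m t.1.2, psl_map m t.2).

Lemma prodb_neq0 t : distinct t -> prodb t != 0.
Proof.
case/and3P => h1 h2 h3; rewrite /prodb !mulf_eq0 !brk_eq0.
by rewrite (negbTE h1) (negbTE h2) (negbTE h3).
Qed.

Lemma prodb_map m t : det m != 0 ->
  prodb (gmap m t) = (lam m t.1.1 * lam m t.1.2 * lam m t.2 * det m) ^+ 2 * det m * prodb t.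
Proof. by move=> hm; rewrite /prodb /gmap /= !brk_map //; ring. Qed.

Lemma cls_map m t : nzsq (det m) -> cls (gmap m t) = cls t.
Proof.
move=> hm; have hm0 := nzsq_neq0 hm.
rewrite /cls prodb_map // -mulrA chi_sq; first by rewrite (chi_sq _ hm).
by apply: nzsq_sq; rewrite !mulf_neq0 // lam_neq0.
Qed.

Definition hflip : F * F * F * F := (alpha, 0, 0, 1).

Lemma det_hflip : det hflip = alpha.
Proof. by rewrite /det /hflip /= mulr1 mulr0 subr0. Qed.

Lemma cls_flip t : distinct t -> cls (gmap hflip t) = - cls t.
Proof.
move=> hd; have hm : det hflip != 0 by rewrite det_hflip alpha_neq0.
rewrite /cls prodb_map // -mulrA chi_sq; last by rewrite nzsq_sq // !mulf_neq0 // lam_neq0.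
by rewrite det_hflip chiM ?alpha_neq0 ?prodb_neq0 // chi_alpha mulN1r.
Qed.

Lemma distinct_map m t : det m != 0 -> distinct (gmap m t) = distinct t.
Proof. by move=> hm; rewrite /distinct /gmap /= !(inj_eq (psl_map_inj hm)). Qed.

Lemma tset_map m t : tset (gmap m t) = psl_map m @: tset t.
Proof. by rewrite /tset /gmap /= ?imsetU1 ?imsetU !imset_set1. Qed.

Lemma gmap_inj m : det m != 0 -> injective (gmap m).
Proof.
move=> hm [[a b] c] [[a' b'] c'] [] /(psl_map_inj hm) -> /(psl_map_inj hm) -> /(psl_map_inj hm) -> //.
Qed.

Lemma gmap_comp m n t : det n != 0 -> gmap m (gmap n t) = gmap (mmul m n) t.
Proof. by move=> hn; rewrite /gmap /= !psl_map_comp. Qed.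

Lemma gmap_invK m t : det m != 0 -> gmap (minv m) (gmap m t) = t.
Proof. by case: t => [[a b] c] hm; rewrite /gmap /= !psl_map_invK. Qed.

Definition stdm (t : trip) : F * F * F * F :=
  let s := brk t.1.2 t.1.1 in
  let P := vv t.1.1 in let Q := vv t.1.2 in
  (s * Q.2, - (s * Q.1), P.2, - P.1).

Lemma app_stdm t X : app (stdm t) (vv X) = (brk t.1.2 t.1.1 * brk X t.1.2, brk X t.1.1).
Proof. rewrite /stdm /app /brk /=; congr pair; ring. Qed.

Lemma det_stdm t : det (stdm t) = brk t.1.2 t.1.1 ^+ 2.
Proof. rewrite /stdm /det /brk /=; ring. Qed.

Definition tv (t : trip) : F := brk t.1.2 t.1.1 * brk t.2 t.1.2 / brk t.2 t.1.1.

Lemma gmap_stdm t : distinct t -> gmap (stdm t) t = (None, Some 0, Some (tv t)).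
Proof.
case/and3P => h1 h2 h3.
rewrite /gmap !psl_mapE !app_stdm /pt /= !(brk_eq0, eqxx) /=.
have -> : (t.1.2 == t.1.1) = false by rewrite eq_sym (negbTE h1).
rewrite (negbTE h3) /tv.
have -> : brk t.1.2 t.1.2 = 0 by apply/eqP; rewrite brk_eq0.
by rewrite mulr0 mul0r.
Qed.

Lemma tv_neq0 t : distinct t -> tv t != 0.
Proof.
case/and3P => h1 h2 h3; rewrite /tv !mulf_eq0 invr_eq0 !brk_eq0.
by rewrite eq_sym (negbTE h1) eq_sym (negbTE h2) (negbTE h3).
Qed.

Lemma chi_tv t : distinct t -> chi (tv t) = cls t.
Proof.
move=> hd; have h3 : brk t.2 t.1.1 != 0 by rewrite brk_eq0; case/and3P: hd.
have -> : tv t = (brk t.2 t.1.1)^-1 ^+ 2 * prodb t.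
  rewrite /tv /prodb (brkC t.1.2 t.1.1) (brkC t.2 t.1.2).
  field; exact: h3.
by rewrite chi_sq // nzsq_sq // invr_eq0.
Qed.

Definition hscale (r : F) : F * F * F * F := (r, 0, 0, 1).

Lemma det_hscale r : det (hscale r) = r.
Proof. by rewrite /det /hscale /= mulr1 mulr0 subr0. Qed.

Lemma gmap_hscale r x : gmap (hscale r) (None, Some 0, Some x) = (None, Some 0, Some (r * x)).
Proof.
rewrite /gmap !psl_mapE /pt /app /hscale /= !mulr0 !mul0r !addr0 !add0r !mulr1 oner_eq0 eqxx.
by rewrite !divr1.
Qed.

Lemma trans t t' : distinct t -> distinct t' -> cls t = cls t' ->
  exists2 m, nzsq (det m) & gmap m t = t'.
Proof.
move=> hd hd' hc.
have s1 : nzsq (det (stdm t)).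
  by rewrite det_stdm nzsq_sq // brk_eq0 eq_sym; case/and3P: hd.
have s2 : nzsq (det (stdm t')).
  by rewrite det_stdm nzsq_sq // brk_eq0 eq_sym; case/and3P: hd'.
set r := tv t' / tv t.
have sr : nzsq r.
  have n1 := tv_neq0 hd; have n2 := tv_neq0 hd'.
  rewrite nzsq_chi /r chiM ?invr_eq0 // chiV !chi_tv // hc.
  by apply/eqP; apply: chi_pm.
exists (mmul (minv (stdm t')) (mmul (hscale r) (stdm t))).
  by rewrite !det_mul det_inv det_hscale; apply: nzsqM => //; apply: nzsqM.
rewrite -gmap_comp; last by rewrite det_mul det_hscale mulf_neq0 // ?nzsq_neq0.
rewrite -gmap_comp; last exact: nzsq_neq0.
rewrite gmap_stdm // gmap_hscale.
have -> : r * tv t = tv t' by rewrite /r divfK // tv_neq0.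
by rewrite -(gmap_stdm hd') gmap_invK // nzsq_neq0.
Qed.

Lemma card_sub_sum (T : finType) (A : {set T}) (P : pred T) :
  #|[set x in A | P x]| = (\sum_(x in A) (P x : nat))%N.
Proof.
rewrite -sum1_card big_mkcond [RHS]big_mkcond /=; apply: eq_bigr => x _.
by rewrite !inE; case: (x \in A); case: (P x).
Qed.

Variable k : nat.
Definition Bk := subgroup_k F k.
Definition Ob := psl_orbit Bk.
Definition NT (T : {set option F}) := #|[set X in Ob | T \subset X]|.
Definition Dset (e : int) := [set t : trip | distinct t && (cls t == e)].
Definition cB (e : int) (X : {set option F}) := #|[set t in Dset e | tset t \subset X]|.

Lemma orbit_map m X : nzsq (det m) -> X \in Ob -> psl_map m @: X \in Ob.
Proof.
move=> hm; rewrite inE => /existsP [m0 /andP [h0 /eqP ->]]; rewrite inE; apply/existsP.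
exists (mmul m m0); apply/andP; split.
  by rewrite psl_coeffE det_mul; apply: nzsqM => //; rewrite -psl_coeffE.
apply/eqP; rewrite -imset_comp; apply: eq_imset => P /=.
by rewrite psl_map_comp // nzsq_neq0 // -psl_coeffE.
Qed.

Lemma imset_invK m (A : {set option F}) : det m != 0 -> psl_map (minv m) @: (psl_map m @: A) = A.
Proof.
move=> hm; rewrite -imset_comp (eq_imset _ (fun P => psl_map_invK P hm)).
by rewrite imset_id.
Qed.

Lemma NT_le m (T : {set option F}) : nzsq (det m) -> (NT T <= NT (psl_map m @: T))%N.
Proof.
move=> hm; have hm0 := nzsq_neq0 hm; rewrite /NT.
rewrite -(card_imset [set X in Ob | T \subset X] (imset_inj (psl_map_inj hm0))).
apply: subset_leq_card; apply/subsetP => Y /imsetP [X hX ->].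
rewrite inE in hX; case/andP: hX => hXO hTX.
by rewrite inE orbit_map // imsetS.
Qed.

Lemma NT_eq m (T : {set option F}) : nzsq (det m) -> NT (psl_map m @: T) = NT T.
Proof.
move=> hm; have hm0 := nzsq_neq0 hm; apply/eqP; rewrite eqn_leq NT_le // andbT.
have hi : nzsq (det (minv m)) by rewrite det_inv.
by have := NT_le (psl_map m @: T) hi; rewrite imset_invK.
Qed.

Lemma NT_class e t t' : t \in Dset e -> t' \in Dset e -> NT (tset t) = NT (tset t').
Proof.
rewrite !inE => /andP [hd /eqP hc] /andP [hd' /eqP hc'].
have [m hm <-] := trans hd hd' (etrans hc (esym hc')).
by rewrite tset_map NT_eq.
Qed.

Lemma cB_le e m (X : {set option F}) : nzsq (det m) -> (cB e X <= cB e (psl_map m @: X))%N.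
Proof.
move=> hm; have hm0 := nzsq_neq0 hm; rewrite /cB.
rewrite -(card_imset [set t in Dset e | tset t \subset X] (gmap_inj hm0)).
apply: subset_leq_card; apply/subsetP => Y /imsetP [t ht ->].
rewrite !inE in ht *; case/andP: ht => /andP [hd hc] hs.
by rewrite distinct_map // cls_map // hd hc tset_map imsetS.
Qed.

Lemma cB_eq e m (X : {set option F}) : nzsq (det m) -> cB e (psl_map m @: X) = cB e X.
Proof.
move=> hm; have hm0 := nzsq_neq0 hm; apply/eqP; rewrite eqn_leq cB_le // andbT.
have hi : nzsq (det (minv m)) by rewrite det_inv.
by have := cB_le e (psl_map m @: X) hi; rewrite imset_invK.
Qed.

Lemma cB_orbit e (X : {set option F}) : X \in Ob -> cB e X = cB e Bk.
Proof.
rewrite inE => /existsP [m0 /andP [h0 /eqP ->]].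
by rewrite cB_eq // -psl_coeffE.
Qed.

Lemma double e t0 : t0 \in Dset e -> (#|Dset e| * NT (tset t0) = #|Ob| * cB e Bk)%N.
Proof.
move=> ht0.
have E1 : (\sum_(t in Dset e) NT (tset t) = #|Dset e| * NT (tset t0))%N.
  rewrite -sum_nat_const; apply: eq_bigr => t ht; exact: NT_class ht ht0.
have E2 : (\sum_(X in Ob) cB e X = #|Ob| * cB e Bk)%N.
  rewrite -sum_nat_const; apply: eq_bigr => X hX; exact: cB_orbit.
rewrite -E1 -E2 /NT /cB.
under eq_bigr do rewrite card_sub_sum.
under [RHS]eq_bigr do rewrite card_sub_sum.
exact: exchange_big.
Qed.

Lemma card_D_le e : (#|Dset e| <= #|Dset (- e)|)%N.
Proof.
have hh : det hflip != 0 by rewrite det_hflip alpha_neq0.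
rewrite -(card_imset (Dset e) (gmap_inj hh)).
apply: subset_leq_card; apply/subsetP => Y /imsetP [t ht ->].
rewrite !inE in ht *; case/andP: ht => hd /eqP hc.
by rewrite distinct_map // hd /= cls_flip // hc eqxx.
Qed.

Lemma card_D : #|Dset 1| = #|Dset (-1)|.
Proof. by apply/eqP; rewrite eqn_leq card_D_le /=; have := card_D_le (-1); rewrite opprK. Qed.

Lemma chi1 : chi (1 : F) = 1.
Proof. by rewrite /chi -{1}(expr1n _ 2) nzsq_sq // oner_eq0. Qed.

Definition tp : trip := (None, Some 0, Some 1).
Definition tm : trip := (None, Some 0, Some alpha).

Lemma tp_in : tp \in Dset 1.
Proof.
rewrite inE /distinct /cls /prodb /brk /=; apply/andP; split.
  by rewrite andbT; apply/eqP => -[] /eqP; rewrite eq_sym oner_eq0.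
have -> : ((1 : F) * 1 - 0 * 0) * (0 * 1 - 1 * 1) * (1 * 0 - 1 * 1) = 1 by ring.
by rewrite chi1.
Qed.

Lemma tm_in : tm \in Dset (-1).
Proof.
rewrite inE /distinct /cls /prodb /brk /=; apply/andP; split.
  by rewrite andbT; apply/eqP => -[] /eqP; rewrite eq_sym (negbTE alpha_neq0).
have -> : ((1 : F) * 1 - 0 * 0) * (0 * 1 - 1 * alpha) * (alpha * 0 - 1 * 1) = alpha by ring.
by rewrite chi_alpha.
Qed.

Lemma card_tset t : distinct t -> #|tset t| = 3%N.
Proof.
case/and3P => h1 h2 h3.
have -> : tset t = t.1.1 |: (t.1.2 |: [set t.2]) by apply/setP => x; rewrite !inE orbA.
by rewrite !cardsU1 cards1 !inE negb_or h1 h2 eq_sym h3.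
Qed.

Lemma three (T : {set option F}) : #|T| = 3%N -> exists2 t, distinct t & T = tset t.
Proof.
move=> hT; have hs : size (enum T) = 3%N by rewrite -cardE.
have hu := enum_uniq T.
case E : (enum T) hs hu => [|a [|b [|c [|]]]] // _.
rewrite /= !inE !andbT => /andP []; rewrite negb_or => /andP [hab hac] hbc.
exists (a, b, c); first by rewrite /distinct /= hab hbc eq_sym hac.
by rewrite -(set_enum T) E /tset; apply/setP => x; rewrite !inE /= orbA.
Qed.

Lemma cls_pm t : cls t = 1 \/ cls t = -1.
Proof. by rewrite /cls /chi; case: nzsq; [left|right]. Qed.

Lemma Bk_in : Bk \in Ob.
Proof.
rewrite inE; apply/existsP; exists (1, 0, 0, 1); rewrite psl_coeffE /det /=.
rewrite mulr1 mulr0 subr0 -{1}(expr1n _ 2) nzsq_sq ?oner_eq0 //=.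
apply/eqP; rewrite -[LHS]imset_id; apply: eq_imset => P /=.
case: P => [x|] //=; rewrite ?eqxx // mul0r add0r oner_eq0 mul1r addr0 divr1 //.
Qed.

Theorem crit : gives_3design F k <-> (cB 1 Bk = cB (-1) Bk /\ (0 < cB 1 Bk)%N).
Proof.
have eqp := double tp_in; have eqm := double tm_in.
rewrite -card_D in eqm.
have d0 : (0 < #|Dset 1|)%N by apply/card_gt0P; exists tp; exact: tp_in.
have o0 : (0 < #|Ob|)%N by apply/card_gt0P; exists Bk; exact: Bk_in.
have tp3 : #|tset tp| = 3%N by apply: card_tset; move: tp_in; rewrite inE => /andP [].
have tm3 : #|tset tm| = 3%N by apply: card_tset; move: tm_in; rewrite inE => /andP [].
split.
  case=> lam [l0 hl].
  have hp : NT (tset tp) = lam := hl _ tp3.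
  have hm : NT (tset tm) = lam := hl _ tm3.
  rewrite hp in eqp; rewrite hm in eqm.
  split; first by apply/eqP; rewrite -(eqn_pmul2l o0) -eqp -eqm.
  by rewrite -(ltn_pmul2l o0) muln0 -eqp muln_gt0 d0.
case=> hc hpos; exists (NT (tset tp)); split.
  by rewrite -(ltn_pmul2l d0) muln0 eqp muln_gt0 o0.
move=> T /three [t hd ->].
rewrite -/(NT (tset t)).
have [hc1|hc1] := cls_pm t.
  by apply: NT_class tp_in; rewrite inE hd hc1 eqxx.
rewrite (@NT_class (-1) t tm _ tm_in); last by rewrite inE hd hc1 eqxx.
by apply/eqP; rewrite -(eqn_pmul2l d0) eqm eqp hc.
Qed.


Definition dd (a b : nat) := ((b + k - a) %% k)%N.
Definition piI (f : nat -> int) (u : 'I_k * 'I_k * 'I_k) : int :=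
  f (dd u.1.1 u.1.2) * f (dd u.1.2 u.2) * f (dd u.2 u.1.1).
Definition distI (u : 'I_k * 'I_k * 'I_k) :=
  [&& (u.1.1 : nat) != u.1.2, (u.1.2 : nat) != u.2 & (u.2 : nat) != u.1.1].
Definition Cnt (f : nat -> int) (e : int) :=
  #|[set u : 'I_k * 'I_k * 'I_k | distI u && (piI f u == e)]|.

Lemma dd_range (a b : nat) : (a < k)%N -> (b < k)%N -> a != b -> (0 < dd a b < k)%N.
Proof.
move=> ha hb hab; rewrite /dd.
have hk : (0 < k)%N by lia.
have [hle|hlt] := leqP a b.
  have -> : (b + k - a = (b - a) + k)%N by lia.
  rewrite modnDr modn_small; lia.
rewrite modn_small; lia.
Qed.

Lemma Cnt_ext f g e : (forall j, (0 < j < k)%N -> f j = g j) -> Cnt f e = Cnt g e.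
Proof.
move=> hfg; apply: eq_card => u; rewrite !inE.
case hd: (distI u) => //=.
case/and3P: hd => h1 h2 h3.
rewrite /piI !hfg //; apply: dd_range => //; by rewrite eq_sym.
Qed.

Hypothesis hk0 : (0 < k)%N.
Hypothesis hdiv : (k %| #|F|.-1)%N.
Hypothesis hev : ~~ odd (#|F|.-1 %/ k).

Definition beta := alpha ^+ (#|F|.-1 %/ k).
Definition fF (j : nat) : int := chi (1 - beta ^+ j).

Lemma beta_prim : k.-primitive_root beta.
Proof. exact: (dvdn_prim_root prim hdiv). Qed.

Lemma beta_sq i : nzsq (beta ^+ i).
Proof. by rewrite /beta -exprM nzsq_exp oddM negb_and hev. Qed.

Lemma beta_inj (a b : nat) : (a < k)%N -> (b < k)%N -> (beta ^+ a == beta ^+ b) = (a == b).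
Proof. by move=> ha hb; rewrite (eq_prim_root_expr beta_prim) !modn_small. Qed.

Lemma chi_diff (a b : nat) : (a < k)%N -> (b < k)%N -> a != b ->
  chi (beta ^+ a - beta ^+ b) = fF (dd a b).
Proof.
move=> ha hb hab.
have -> : beta ^+ a - beta ^+ b = beta ^+ a * (1 - beta ^+ (dd a b)).
  rewrite mulrBr mulr1 -exprD -(prim_expr_mod beta_prim (a + _)) /dd modnDmr.
  have -> : (a + (b + k - a) = b + k)%N by lia.
  by rewrite modnDr (prim_expr_mod beta_prim).
by rewrite chi_sq // beta_sq.
Qed.

Definition iot (i : 'I_k) : option F := Some (beta ^+ i).
Definition iot3 (u : 'I_k * 'I_k * 'I_k) : trip := (iot u.1.1, iot u.1.2, iot u.2).

Lemma iot_inj : injective iot.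
Proof. move=> i j [] /eqP; rewrite beta_inj // => /eqP; exact: val_inj. Qed.

Lemma iot3_inj : injective iot3.
Proof.
move=> [[a b] c] [[a' b'] c'] h.
have e1 : iot a = iot a' by exact: (congr1 (fun t : trip => t.1.1) h).
have e2 : iot b = iot b' by exact: (congr1 (fun t : trip => t.1.2) h).
have e3 : iot c = iot c' by exact: (congr1 (fun t : trip => t.2) h).
by rewrite (iot_inj e1) (iot_inj e2) (iot_inj e3).
Qed.

Lemma inBk X : X \in Bk -> exists i : 'I_k, X = iot i.
Proof.
case/imsetP => x; rewrite inE => /eqP hx ->.
by have [i ->] := prim_rootP beta_prim hx; exists i.
Qed.

Lemma iot_in i : iot i \in Bk.
Proof.
apply/imsetP; exists (beta ^+ i) => //.
by rewrite inE -exprM mulnC exprM (prim_expr_order beta_prim) expr1n.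
Qed.

Lemma cls_iot u : distI u -> cls (iot3 u) = piI fF u.
Proof.
case: u => [[a b] c]; case/and3P => /= h1 h2 h3.
rewrite /cls /prodb /iot3 /iot /brk /= !mulr1 !mul1r.
have nz : forall (x y : 'I_k), (x : nat) != y -> beta ^+ x - beta ^+ y != 0.
  by move=> x y hxy; rewrite subr_eq0 beta_inj.
rewrite !chiM ?mulf_neq0 ?nz //.
by rewrite /piI /= !chi_diff.
Qed.

Lemma cB_Cnt e : cB e Bk = Cnt fF e.
Proof.
rewrite /cB /Cnt -(card_imset _ iot3_inj); apply: eq_card => t.
apply/idP/idP.
  rewrite !inE => /andP [/andP [hd /eqP hc] hs].
  case: t hd hc hs => [[P Q] R] hd hc hs.
  have hP : P \in Bk by apply: (subsetP hs); rewrite /tset !inE eqxx.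
  have hQ : Q \in Bk by apply: (subsetP hs); rewrite /tset !inE eqxx orbT.
  have hR : R \in Bk by apply: (subsetP hs); rewrite /tset !inE eqxx orbT.
  have [a ea] := inBk hP; have [b eb] := inBk hQ; have [c ec] := inBk hR.
  subst P Q R.
  have hdu : distI (a, b, c).
    case/and3P: hd => /= h1 h2 h3.
    rewrite !(inj_eq iot_inj) in h1 h2 h3.
    by apply/and3P; split.
  apply/imsetP; exists (a, b, c) => //.
  by rewrite inE hdu /= -cls_iot // hc.
case/imsetP => u; rewrite inE => /andP [hdu /eqP hc] ->.
have hd : distinct (iot3 u).
  case/and3P: hdu => h1 h2 h3.
  by rewrite /distinct /= !(inj_eq iot_inj); apply/and3P; split.
rewrite !inE hd cls_iot // hc eqxx /=.
by apply/subsetP => X; rewrite /tset !inE => /orP [/orP [] | ] /eqP ->; apply: iot_in.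
Qed.

Theorem crit2 : gives_3design F k <-> (Cnt fF 1 = Cnt fF (-1) /\ (0 < Cnt fF 1)%N).
Proof. by rewrite -!cB_Cnt; exact: crit. Qed.


Lemma beta_neq1 x : (0 < x < k)%N -> 1 - beta ^+ x != 0.
Proof.
move=> hx; rewrite subr_eq0 eq_sym -(expr0 beta) beta_inj //; lia.
Qed.

Lemma fF_sym j : (0 < j < k)%N -> fF (k - j) = fF j.
Proof.
move=> hj; rewrite /fF.
have -> : 1 - beta ^+ (k - j) = (-1 * beta ^+ (k - j)) * (1 - beta ^+ j).
  rewrite mulN1r mulNr mulrBr mulr1 -exprD subnK; last lia.
  rewrite (prim_expr_order beta_prim); ring.
by rewrite chi_sq // nzsqM // ?nzsqN1 ?beta_sq.
Qed.

Definition seq_odd := [seq fF i | i <- iota 1 k.-1./2].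

Lemma nth_seq_odd i : (0 < i <= k.-1./2)%N -> nth 0 seq_odd i.-1 = fF i.
Proof.
move=> hi; rewrite /seq_odd (nth_map 0%N); last by rewrite size_iota; lia.
rewrite nth_iota; last lia.
congr fF; lia.
Qed.

Lemma odd_case j : odd k -> (0 < j < k)%N ->
  fF j = nth 0 seq_odd (minn j (k - j)).-1.
Proof.
move=> ko hj.
have [hle|hgt] := leqP j k.-1./2.
  have -> : minn j (k - j) = j by lia.
  by rewrite nth_seq_odd //; lia.
have -> : minn j (k - j) = (k - j)%N by lia.
by rewrite nth_seq_odd ?fF_sym //; lia.
Qed.

Lemma z_sq1 (z : F) : z ^+ 2 = 1 -> z != 1 -> z = -1.
Proof.
move=> z2 zn1.
have : (z - 1) * (z + 1) == 0 by rewrite mulrDr mulr1 mulrBl mul1r -expr2 z2; apply/eqP; ring.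
by rewrite mulf_eq0 subr_eq0 (negbTE zn1) /= addr_eq0 => /eqP.
Qed.

Section EvenCase.
Hypothesis k42 : (k %% 4 = 2)%N.

Definition mm := ((k - 2) %/ 4)%N.
Definition hh := (k./2)%N.

Definition seq_ev := [seq fF (2 * i) | i <- iota 1 mm] ++ [:: chi (2 : F)].

Lemma nth_seq_ev i : (0 < i <= mm)%N -> nth 0 seq_ev i.-1 = fF (2 * i).
Proof.
move=> hi; rewrite /seq_ev nth_cat size_map size_iota.
have -> : (i.-1 < mm)%N by lia.
rewrite (nth_map 0%N); last by rewrite size_iota; lia.
rewrite nth_iota; last lia.
congr fF; lia.
Qed.

Lemma nth_seq_ev_last : nth 0 seq_ev mm = chi (2 : F).
Proof. by rewrite /seq_ev nth_cat size_map size_iota ltnn subnn. Qed.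

Definition ev j := nth 0 seq_ev (minn (j %/ 2) (hh - j %/ 2)).-1.

Lemma even_case j : ~~ odd j -> (0 < j < k)%N -> fF j = ev j.
Proof.
move=> ej hj; rewrite /ev.
have [hk1 hk2] : k = (mm * 4 + 2)%N /\ hh = mm.*2.+1 by rewrite /mm /hh; lia.
have [hle|hgt] := leqP (j %/ 2) mm.
  have -> : minn (j %/ 2) (hh - j %/ 2) = (j %/ 2)%N by lia.
  rewrite nth_seq_ev; last lia.
  congr fF; lia.
have -> : minn (j %/ 2) (hh - j %/ 2) = (hh - j %/ 2)%N by lia.
rewrite nth_seq_ev; last lia.
rewrite -fF_sym; last lia.
congr fF; lia.
Qed.

Lemma beta_hh : beta ^+ hh = -1.
Proof.
apply: z_sq1.
  by rewrite -exprM (_ : (hh * 2 = k)%N) ?(prim_expr_order beta_prim) // /hh; lia.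
rewrite -(expr0 beta) beta_inj /hh; lia.
Qed.

Lemma fF_hh : fF hh = chi (2 : F).
Proof. by rewrite /fF beta_hh opprK. Qed.

Lemma mod2k x : (x < k.*2)%N -> (x %% k = if (x < k) then x else x - k)%N.
Proof.
move=> h; case: ifP => hx; first by rewrite modn_small.
have -> : x = ((x - k) + k)%N by lia.
rewrite modnDr modn_small; lia.
Qed.

Lemma odd_case2 j : odd j -> j != hh -> (0 < j < k)%N ->
  fF j = fF ((2 * ((j + hh) %% k)) %% k) * fF ((j + hh) %% k).
Proof.
move=> oj jh hj.
set jj := ((j + hh) %% k)%N.
have hjj : (0 < jj < k)%N /\ ~~ odd jj.
  rewrite /jj mod2k /hh; last lia.
  case: ifP; rewrite /hh in jh; lia.
have h2 : (0 < (2 * jj) %% k < k)%N.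
  rewrite mod2k; last lia.
  case: ifP; rewrite /hh in jh *; lia.
set g := beta ^+ jj.
have eg : beta ^+ j = - g.
  rewrite /g /jj (prim_expr_mod beta_prim) exprD beta_hh; ring.
have eg2 : beta ^+ ((2 * jj) %% k) = g ^+ 2.
  by rewrite (prim_expr_mod beta_prim) /g -exprM mulnC.
rewrite /fF eg2 eg.
have n1 : 1 - - g != 0 by rewrite -eg beta_neq1.
have n2 : 1 - g != 0 by rewrite /g beta_neq1; case: hjj.
have -> : 1 - g ^+ 2 = (1 - - g) * (1 - g) by ring.
by rewrite chiM // -mulrA chi_pm mulr1.
Qed.

Definition Phi_ev j : int :=
  if j == hh then nth 0 seq_ev mm
  else if odd j then ev ((2 * ((j + hh) %% k)) %% k) * ev ((j + hh) %% k)
  else ev j.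

Lemma ev_case j : (0 < j < k)%N -> fF j = Phi_ev j.
Proof.
move=> hj; rewrite /Phi_ev.
have [->|jh] := eqVneq j hh; first by rewrite nth_seq_ev_last fF_hh.
case: ifP => oj; last by rewrite even_case ?oj.
rewrite odd_case2 // !even_case //.
- rewrite mod2k /hh; last lia. case: ifP; rewrite /hh in jh; lia.
- rewrite mod2k /hh; last lia. case: ifP; rewrite /hh in jh; lia.
- rewrite mod2k; last lia. rewrite mod2k /hh; last lia.
  case: ifP; case: ifP; rewrite /hh in jh; lia.
- rewrite mod2k; last lia. rewrite mod2k /hh; last lia.
  case: ifP; case: ifP; rewrite /hh in jh; lia.
Qed.

End EvenCase.

End Chi.

Theorem proposition2p8 (k : nat) (hk : (0 < k)%N) :
  (odd k ->
    exists S : seq int -> Prop, pm1_seqs k.-1./2 S /\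
      forall (F : finFieldType) (alpha : F),
        (#|F| %% 4 = 1)%N -> (k %| #|F|.-1)%N -> ~~ odd (#|F|.-1 %/ k)%N ->
        (#|F|.-1).-primitive_root alpha ->
        let beta := alpha ^+ (#|F|.-1 %/ k) in
        gives_3design F k <->
          S [seq chi (1 - beta ^+ i) | i <- iota 1 k.-1./2]) /\
  ((k %% 4 = 2)%N ->
    exists S : seq int -> Prop, pm1_seqs (k.+2 %/ 4) S /\
      forall (F : finFieldType) (alpha : F),
        (#|F| %% 4 = 1)%N -> (k %| #|F|.-1)%N -> ~~ odd (#|F|.-1 %/ k)%N ->
        (#|F|.-1).-primitive_root alpha ->
        let beta := alpha ^+ (#|F|.-1 %/ k) in
        gives_3design F k <->
          S ([seq chi (1 - beta ^+ (2 * i)) | i <- iota 1 ((k - 2) %/ 4)]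
             ++ [:: chi (2 : F)])).
Proof.
split.
  move=> ko.
  exists (fun s => exists (F : finFieldType) (alpha : F),
    [/\ (#|F| %% 4 = 1)%N, (k %| #|F|.-1)%N, ~~ odd (#|F|.-1 %/ k)%N,
        (#|F|.-1).-primitive_root alpha & seq_odd alpha k = s /\ gives_3design F k]).
  split.
    move=> s [F [alpha [_ _ _ _ [<- _]]]]; split; first by rewrite size_map size_iota.
    by apply/allP => x /mapP [i _ ->]; rewrite /fF /chi; case: nzsq.
  move=> F alpha h1 h2 h3 h4 beta; split.
    by move=> hd; exists F, alpha; split => //.
  case=> F' [alpha' [h1' h2' h3' h4' [hs hd']]].
  apply/(crit2 h1 h4 hk h2 h3).
  have E : forall e, Cnt k (fF alpha' k) e = Cnt k (fF alpha k) e.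
    move=> e; apply: (Cnt_ext h1 h4) => j hj.
    rewrite (odd_case h1' h4' hk h2' h3' ko hj) (odd_case h1 h4 hk h2 h3 ko hj) hs.
    by [].
  by rewrite -!E; apply/(crit2 h1' h4' hk h2' h3').
move=> k42.
exists (fun s => exists (F : finFieldType) (alpha : F),
  [/\ (#|F| %% 4 = 1)%N, (k %| #|F|.-1)%N, ~~ odd (#|F|.-1 %/ k)%N,
      (#|F|.-1).-primitive_root alpha & seq_ev alpha k = s /\ gives_3design F k]).
split.
  move=> s [F [alpha [_ _ _ _ [<- _]]]]; split.
    rewrite size_cat size_map size_iota /= /mm; lia.
  rewrite all_cat /= andbT; apply/andP; split; last by rewrite /chi; case: nzsq.
  by apply/allP => x /mapP [i _ ->]; rewrite /fF /chi; case: nzsq.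
move=> F alpha h1 h2 h3 h4 beta; split.
  by move=> hd; exists F, alpha; split => //.
case=> F' [alpha' [h1' h2' h3' h4' [hs hd']]].
apply/(crit2 h1 h4 hk h2 h3).
have E : forall e, Cnt k (fF alpha' k) e = Cnt k (fF alpha k) e.
  move=> e; apply: (Cnt_ext h1 h4) => j hj.
  rewrite (ev_case h1' h4' hk h2' h3' k42 hj) (ev_case h1 h4 hk h2 h3 k42 hj).
  by rewrite /Phi_ev /ev hs.
by rewrite -!E; apply/(crit2 h1' h4' hk h2' h3').
Qed.
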